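(* Fix a resource block $n$. Let $\mathcal K=\{1,\dots,K\}$, and for each $k\in\mathcal K$ let $M^{(k)}\ge 1$ be an integer and $\tilde{\mathcal K}^{(k)}\subseteq\mathcal K\setminus\{k\}$ a set with $|\tilde{\mathcal K}^{(k)}|=\tilde K$ for all $k$. Let $w^{(k)}_m, r^{(k)}_{m,n}, \tilde r^{(k,\tilde k)}_{m,n}$ be arbitrary real coefficients. Consider the linear program in the variables $x^{(k)}_{m,n}$ ($k\in\mathcal K$, $m\in\{1,\dots,M^{(k)}\}$), $y^{(k,\tilde k)}_{m,n}$ ($k\in\mathcal K$, $\tilde k\in\tilde{\mathcal K}^{(k)}$, $m\in\{1,\dots,M^{(k)}\}$) and $I^{(k)}_n$ ($k\in\mathcal K$): $$\max\ \sum_{k=1}^K\sum_{m=1}^{M^{(k)}} w^{(k)}_m\Big(x^{(k)}_{m,n}r^{(k)}_{m,n}+\sum_{\tilde k\in\tilde{\mathcal K}^{(k)}} y^{(k,\tilde k)}_{m,n}\tilde r^{(k,\tilde k)}_{m,n}\Big)$$ subject to $\sum_{m=1}^{M^{(k)}}x^{(k)}_{m,n}=1-I^{(k)}_n$ for all $k$; $\sum_{\tilde k\in\tilde{\mathcal K}^{(k)}}y^{(k,\tilde k)}_{m,n}\le x^{(k)}_{m,n}$ for all $k,m$; $\sum_{m=1}^{M^{(k)}}y^{(k,\tilde k)}_{m,n}\le I^{(\tilde k)}_n$ for all $k$ and $\tilde k\in\tilde{\mathcal K}^{(k)}$; and $x^{(k)}_{m,n},y^{(k,\tilde k)}_{m,n},I^{(k)}_n\in[0,1]$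 for all indices. Then at every optimal vertex (basic optimal solution) of this linear program, the percentage of variables taking a value in $\{0,1\}$ is at least $$\frac{\tilde K(\bar M-1)}{(\tilde K+1)\bar M+1}\cdot 100\%,\qquad \bar M=\frac1K\sum_{k=1}^K M^{(k)}.$$
   Context: This linear program is the relaxation (binary constraints replaced by $[0,1]$ bounds) of a binary linear program for weighted sum-rate maximization with resource-block blanking in a $K$-sector cellular network: $x^{(k)}_{m,n}$ indicates assignment of resource block $n$ to user $m$ in sector $k$, $I^{(k)}_n$ indicates that block $n$ is blanked in sector $k$, and $y^{(k,\tilde k)}_{m,n}$ are auxiliary variables. $\tilde K$ is the common number of neighboring interfering sectors per sector and $\bar M$ the average number of users per sector. *)

(* Defs.v *)
From HB Require Import structures.
From mathcomp Require Import all_boot all_order all_algebra.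
Set Implicit Arguments. Unset Strict Implicit. Unset Printing Implicit Defensive.
Import Order.TTheory GRing.Theory Num.Theory.
Local Open Scope ring_scope.

(* The LP relaxation for a fixed resource block n (the index n is dropped).
   Sectors are 'I_K; sector k has M k users ('I_(M k));
   Ktil k is the set of neighbouring interfering sectors of k. *)
Section LP.
Variable R : realFieldType.
Variable K : nat.
Variable M : 'I_K -> nat.
Variable Ktil : 'I_K -> {set 'I_K}.

Definition XI : finType := {k : 'I_K & 'I_(M k)}.
Definition YI0 : finType := {k : 'I_K & ('I_K * 'I_(M k))%type}.
Definition YI : finType := {p : YI0 | (tagged p).1 \in Ktil (tag p)}.
Definition var : finType := ((XI + YI) + 'I_K)%type.

Definition xvar (i : XI) : var := inl (inl i).
Definition yvar (p : YI) : var := inl (inr p).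
Definition Ivar (k : 'I_K) : var := inr k.

Definition yk (p : YI) : 'I_K := tag (val p).
Definition ykt (p : YI) : 'I_K := (tagged (val p)).1.
Definition ym (p : YI) : 'I_(M (yk p)) := (tagged (val p)).2.
Definition yx (p : YI) : XI := Tagged (fun k => 'I_(M k)) (ym p).

Definition feasible (z : {ffun var -> R}) : Prop :=
  [/\ (forall k : 'I_K,
         \sum_(m < M k) z (xvar (Tagged (fun k => 'I_(M k)) m)) = 1 - z (Ivar k)),
      (forall i : XI, \sum_(p : YI | yx p == i) z (yvar p) <= z (xvar i)),
      (forall k kt : 'I_K, kt \in Ktil k ->
         \sum_(p : YI | (yk p == k) && (ykt p == kt)) z (yvar p) <= z (Ivar kt))
    & (forall v : var, 0 <= z v <= 1)].

Variable w r : forall k : 'I_K, 'I_(M k) -> R.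
Variable rt : forall k : 'I_K, 'I_K -> 'I_(M k) -> R.

Definition objective (z : {ffun var -> R}) : R :=
  \sum_(i : XI) @w (tag i) (tagged i) *
     (z (xvar i) * @r (tag i) (tagged i)
      + \sum_(p : YI | yx p == i) z (yvar p) * @rt (yk p) (ykt p) (ym p)).

Definition optimal (z : {ffun var -> R}) : Prop :=
  feasible z /\ forall z', feasible z' -> objective z' <= objective z.

Definition vertex (z : {ffun var -> R}) : Prop :=
  feasible z /\
  forall (z1 z2 : {ffun var -> R}) (t : R),
    feasible z1 -> feasible z2 -> 0 < t < 1 ->
    (forall v, z v = t * z1 v + (1 - t) * z2 v) -> z1 = z2.

Definition n_integral (z : {ffun var -> R}) : nat :=
  #|[pred v : var | (z v == 0) || (z v == 1)]|.

Definition Mbar : R := (\sum_(k < K) (M k)%:R) / K%:R.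

End LP.

(* Main.v *)
Require Import Defs.
From HB Require Import structures.
From mathcomp Require Import all_boot all_order all_algebra.
From mathcomp Require Import ring lra zify.
Import Order.TTheory GRing.Theory Num.Theory.
Set Implicit Arguments. Unset Strict Implicit. Unset Printing Implicit Defensive.
Local Open Scope ring_scope.

Lemma sum_delta (R : pzRingType) (T : finType) (x : T) (f : T -> R) :
  \sum_v (x == v)%:R * f v = f x.
Proof.
rewrite (bigD1 x) //= eqxx mul1r big1 ?addr0 // => v.
by rewrite eq_sym => /negbTE ->; rewrite mul0r.
Qed.

Lemma sum_delta_gen (R : pzRingType) (T J : finType) (P : pred J) (g : J -> T)
  (f : T -> R) :
  \sum_v (\sum_(j | P j) (g j == v)%:R) * f v = \sum_(j | P j) f (g j).
Proof.
under eq_bigr do rewrite mulr_suml.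
rewrite exchange_big /=; apply: eq_bigr => j _; exact: sum_delta.
Qed.

Lemma kernel_exists (R : fieldType) (I J : finType) (F : {set I})
  (a : J -> I -> R) :
  (#|J| < #|F|)%N ->
  exists u : I -> R, [/\ exists i, u i != 0, forall i, i \notin F -> u i = 0
     & forall j, \sum_i a j i * u i = 0].
Proof.
move=> hlt.
pose A : 'M[R]_(#|F|, #|J|) := \matrix_(t, s) a (enum_val s) (enum_val t).
have hK : kermx A != 0.
  rewrite -mxrank_eq0 mxrank_ker subn_eq0 -ltnNge.
  exact: leq_ltn_trans (rank_leq_col A) hlt.
have [t Ht] : exists t, row t (kermx A) != 0.
  apply/existsP; apply: contraNT hK; rewrite negb_exists => /forallP H.
  apply/eqP/row_matrixP => t; rewrite row0; by move: (H t); rewrite negbK => /eqP.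
set w := row t (kermx A).
have wA : w *m A = 0 by rewrite -row_mul mulmx_ker row0.
have [t0 Ht0] : exists t0, w 0 t0 != 0.
  apply/existsP; apply: contraNT Ht; rewrite negb_exists => /forallP H.
  apply/eqP/rowP => t'; move: (H t'); rewrite negbK => /eqP ->; by rewrite mxE.
exists (fun i => \sum_(t' < #|F|) (enum_val t' == i)%:R * w 0 t'); split.
- exists (enum_val t0).
  under eq_bigr do rewrite (inj_eq enum_val_inj) eq_sym.
  by rewrite sum_delta.
- move=> i Hi; apply: big1 => t' _.
  have := enum_valP t'; case: eqP => [-> |]; first by rewrite (negbTE Hi).
  by rewrite mul0r.
- move=> j.
  under eq_bigr do rewrite mulr_sumr.
  rewrite exchange_big /=.
  under eq_bigr => t1 _ do (under eq_bigr do rewrite mulrCA; rewrite (@sum_delta _ _ _ (fun i => a j i * w 0 t1))).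

  transitivity ((w *m A) 0 (enum_rank j)); last by rewrite wA mxE.
  rewrite mxE; apply: eq_bigr => t1 _.
  rewrite mulrC; congr (_ * _); rewrite /A mxE; congr (a _ _); by rewrite enum_rankK.
Qed.

Lemma small_pos (R : realFieldType) (T : finType) (P : pred T) (b : T -> R) :
  (forall i, P i -> 0 < b i) -> exists2 s, 0 < s & forall i, P i -> s <= b i.
Proof.
move=> hb; exists (\big[Num.min/1]_(i | P i) b i).
  elim/big_ind: _ => //.
  by move=> x y hx hy; rewrite lt_min hx hy.
move=> i Pi; rewrite (bigD1 i) //= ge_min lexx //.
Qed.

Section Main.
Variable R : realFieldType.
Variable K : nat.
Variable M : 'I_K -> nat.
Variable Ktil : 'I_K -> {set 'I_K}.

Definition C3 : finType := {p : ('I_K * 'I_K)%type | p.2 \in Ktil p.1}.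
Definition Cn : finType := (('I_K + XI M) + C3)%type.

Definition Lc (c : Cn) (f : var M Ktil -> R) : R :=
  match c with
  | inl (inl k) => \sum_(m < M k) f (xvar Ktil (Tagged (fun k => 'I_(M k)) m))
                   + f (Ivar M Ktil k)
  | inl (inr i) => \sum_(p : YI M Ktil | yx p == i) f (yvar p) - f (xvar Ktil i)
  | inr q => \sum_(p : YI M Ktil | (yk p == (val q).1) && (ykt p == (val q).2))
               f (yvar p) - f (Ivar M Ktil (val q).2)
  end.

Definition acoef (c : Cn) (v : var M Ktil) : R :=
  Lc c (fun u => (u == v)%:R).

Lemma Lc_rep c f : \sum_v acoef c v * f v = Lc c f.
Proof.
case: c => [[k|i]|q] /=; rewrite /acoef /=.
- under eq_bigr do rewrite mulrDl.
  by rewrite big_split /= sum_delta_gen sum_delta.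
- under eq_bigr do rewrite mulrBl.
  by rewrite sumrB /= sum_delta_gen sum_delta.
- under eq_bigr do rewrite mulrBl.
  by rewrite sumrB /= sum_delta_gen sum_delta.
Qed.

Lemma Lc_lin c (z u : var M Ktil -> R) s :
  Lc c (fun v => z v + s * u v) = Lc c z + s * Lc c u.
Proof.
rewrite -!Lc_rep mulr_sumr -big_split /=; apply: eq_bigr => v _.
by rewrite mulrDr mulrCA.
Qed.

Lemma Lc_ext c (f g : var M Ktil -> R) : (forall v, f v = g v) -> Lc c f = Lc c g.
Proof. by move=> h; rewrite -!Lc_rep; apply: eq_bigr => v _; rewrite h. Qed.

Lemma feas_pert (z : {ffun var M Ktil -> R}) (u : var M Ktil -> R) s :
  feasible z -> (forall c, Lc c u = 0) ->
  (forall v, 0 <= z v + s * u v <= 1) ->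
  feasible [ffun v => z v + s * u v].
Proof.
move=> [h1 h2 h3 h4] hu hb.
have E c : Lc c [ffun v => z v + s * u v] = Lc c z.
  rewrite (@Lc_ext c _ (fun v => z v + s * u v)); last by move=> v; rewrite ffunE.
  by rewrite Lc_lin hu mulr0 addr0.
split.
- move=> k; have e := E (inl (inl k)); rewrite /= (h1 k) subrK in e.
  by rewrite -e addrK.
- move=> i; rewrite -subr_le0; have := E (inl (inr i)); rewrite /= => ->.
  by rewrite subr_le0.
- move=> k kt hk; rewrite -subr_le0.
  have := E (inr (exist _ (k, kt) hk)); rewrite /= => ->.
  by rewrite subr_le0 h3.
- by move=> v; rewrite ffunE.
Qed.

End Main.

Section Cards.
Variable K : nat.
Variable M : 'I_K -> nat.
Variable Ktil : 'I_K -> {set 'I_K}.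

Lemma card_XI : #|XI M| = (\sum_(k < K) M k)%N.
Proof.
rewrite /XI card_tagged sumnE big_map big_enum /=.
by apply: eq_bigr => k _; rewrite card_ord.
Qed.

Lemma card_YI : #|YI M Ktil| = (\sum_(k < K) #|Ktil k| * M k)%N.
Proof.
rewrite /YI card_sig -sum1_card.
transitivity (\sum_(k < K) \sum_(j : ('I_K * 'I_(M k))%type | j.1 \in Ktil k) 1)%N.
  by rewrite sig_big_dep; apply: eq_bigl => p; rewrite !inE.
apply: eq_bigr => k _.
transitivity (\sum_(a in Ktil k) \sum_(b < M k) 1)%N.
  by rewrite pair_big; apply: eq_bigl => p /=; rewrite andbT.
by rewrite sum_nat_const sum_nat_const card_ord muln1.
Qed.

Lemma card_C3 Kt : (forall k, #|Ktil k| = Kt) -> #|C3 Ktil| = (K * Kt)%N.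
Proof.
move=> hc; rewrite /C3 card_sig -sum1_card.
transitivity (\sum_(k < K) \sum_(kt in Ktil k) 1)%N.
  by rewrite pair_big_dep; apply: eq_bigl => p; rewrite !inE.
under eq_bigr do rewrite sum1_card hc.
by rewrite sum_nat_const card_ord.
Qed.

End Cards.

Lemma arith_final (R : realFieldType) (n S Kt K : nat) :
  (Kt * S <= n + K * Kt)%N -> (K = 0 -> S = 0)%N ->
  n%:R / (S + Kt * S + K)%:R * 100
    >= Kt%:R * (S%:R / K%:R - 1) / ((Kt%:R + 1) * (S%:R / K%:R) + 1) * (100 : R).
Proof.
move=> key hS0.
case: (posnP K) => [K0|Kpos].
  have S0 := hS0 K0.
  rewrite S0 K0 /= invr0 !(mulr0, mul0r, add0r, sub0r, addn0, muln0, addr0).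
  rewrite invr1 mulr1; have := ler0n R Kt; lra.
rewrite !natrD !natrM.
set k := K%:R; set s := S%:R; set t := Kt%:R; set nn := n%:R.
have hk : 0 < k by rewrite ltr0n.
have hs : 0 <= s by rewrite ler0n.
have ht : 0 <= t by rewrite ler0n.
have hts : 0 <= t * s by rewrite mulr_ge0.
have key' : t * s <= nn + k * t.
  by have := key; rewrite -(ler_nat R) natrD !natrM.
have hV : 0 < s + t * s + k by lra.
have hD : 0 < (t + 1) * (s / k) + 1.
  by rewrite ltr_wpDl ?ltr01 // mulr_ge0 ?divr_ge0 // ?ltW //; lra.
have eq : t * (s / k - 1) / ((t + 1) * (s / k) + 1) = (t * s - k * t) / (s + t * s + k).
  by field; rewrite (gt_eqF hV) (gt_eqF hk).
rewrite eq ler_pM2r; last lra.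
rewrite ler_pM2r ?invr_gt0 //; lra.
Qed.

Theorem proposition1 (R : realFieldType) (K : nat) (M : 'I_K -> nat)
  (Ktil : 'I_K -> {set 'I_K}) (Kt : nat)
  (hM : forall k, (1 <= M k)%N)
  (hKtil : forall k, k \notin Ktil k)
  (hcard : forall k, #|Ktil k| = Kt)
  (w r : forall k : 'I_K, 'I_(M k) -> R)
  (rt : forall k : 'I_K, 'I_K -> 'I_(M k) -> R)
  (z : {ffun var M Ktil -> R}) :
  optimal w r rt z -> vertex z ->
  (n_integral z)%:R / #|var M Ktil|%:R * 100
    >= Kt%:R * (Mbar R M - 1) / ((Kt%:R + 1) * Mbar R M + 1) * 100.
Proof.
move=> [feas _] [_ Hvert].
have feas' := feas; case: feas' => _ _ _ hbnd.
pose F : {set var M Ktil} := [set v | (0 < z v) && (z v < 1)].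
have HF : (#|F| <= #|Cn M Ktil|)%N.
  rewrite leqNgt; apply/negP => Hlt.
  have [u [[i0 Hi0] Hout Hker]] := @kernel_exists R _ _ F (@acoef R K M Ktil) Hlt.
  have Lu : forall c, Lc c u = 0 by move=> c; rewrite -Lc_rep Hker.
  have [s spos hs] : exists2 s : R, 0 < s & forall v, v \in F ->
      s <= Num.min (z v) (1 - z v) / (`|u v| + 1).
    apply: small_pos => v; rewrite inE => /andP [h0 h1].
    rewrite divr_gt0 // ?lt_min ?h0 ?subr_gt0 ?h1 //.
    by rewrite ltr_wpDl // ltr01.
  have Hb e : `|e| <= s -> forall v, 0 <= z v + e * u v <= 1.
    move=> he v; case: (boolP (v \in F)) => Hv; last first.
      by rewrite Hout // mulr0 addr0.
    set m := Num.min (z v) (1 - z v).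
    have hm1 : m <= z v by rewrite /m ge_min lexx.
    have hm2 : m <= 1 - z v by rewrite /m ge_min lexx orbT.
    have hm0 : 0 <= m.
      by move: Hv; rewrite inE => /andP [h0 h1]; rewrite le_min ltW // subr_ge0 ltW.
    have hu0 : 0 < `|u v| + 1 by rewrite ltr_wpDl // ltr01.
    have : `|e * u v| <= m.
      rewrite normrM; apply: le_trans (_ : s * `|u v| <= m).
        by rewrite ler_wpM2r.
      apply: le_trans (_ : m / (`|u v| + 1) * `|u v| <= m).
        by rewrite ler_wpM2r // (hs v Hv).
      rewrite mulrAC ler_pdivrMr // ler_wpM2l //; lra.
    rewrite ler_norml => /andP [ha hb].
    apply/andP; split; lra.
  have hs1 : `|s| <= s by rewrite ger0_norm ?(ltW spos).
  have hs2 : `|- s| <= s by rewrite normrN ger0_norm ?(ltW spos).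
  have := Hvert [ffun v => z v + s * u v] [ffun v => z v + (- s) * u v] (1/2)
    (feas_pert feas Lu (Hb _ hs1)) (feas_pert feas Lu (Hb _ hs2)).
  have ht : 0 < (1/2 : R) < 1 by apply/andP; split; lra.
  move=> /(_ ht) H.
  have : [ffun v => z v + s * u v] = [ffun v => z v + (- s) * u v].
    by apply: H => v; rewrite !ffunE; field.
  move=> /ffunP /(_ i0); rewrite !ffunE => /addrI.
  rewrite mulNr => /eqP; rewrite -subr_eq0 opprK -mulr2n mulrn_eq0 /=.
  by rewrite mulf_eq0 (gt_eqF spos) (negbTE Hi0).
have Hint : (n_integral z + #|F|)%N = #|var M Ktil|.
  rewrite -(cardC F) addnC; congr addn.
  rewrite /n_integral; apply: eq_card => v; rewrite !inE.
  have /andP [h0 h1] := hbnd v.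
  by rewrite !lt_def h0 h1 !andbT negb_and !negbK (eq_sym 1).
set S := (\sum_(k < K) M k)%N.
have HV : #|var M Ktil| = (S + Kt * S + K)%N.
  rewrite /var !card_sum card_XI card_YI card_ord.
  by rewrite /S big_distrr /=; congr (_ + _ + _)%N; apply: eq_bigr => k _; rewrite hcard.
have HC : #|Cn M Ktil| = (K + S + K * Kt)%N.
  by rewrite /Cn !card_sum card_ord card_XI (card_C3 hcard).
have key : (Kt * S <= n_integral z + K * Kt)%N.
  rewrite HV in Hint; rewrite HC in HF; lia.
rewrite /Mbar -natr_sum -/S HV.
apply: arith_final key _ => K0.
by rewrite /S; apply: big1 => -[k hk] _; exfalso; move: hk; rewrite K0.
Qed.
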